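(* Let $v=[q;w_1,\ldots,w_n]$ be a WVG, $i$ a player, and $S\subseteq N\setminus\{i\}$ a coalition. Then $\phi_i(v)\le\phi_{\&(\{i\}\cup S)}(v_{\&(\{i\}\cup S)})\le 1$; that is, annexation never decreases a player's Shapley–Shubik index.
   Context: A weighted voting game (WVG) $v=[q;w_1,\ldots,w_n]$ has player set $N=\{1,\ldots,n\}$, nonnegative weights $w_j$ and quota $q$ with $0<q\le \sum_j w_j$; $v(X)=1$ if $\sum_{j\in X}w_j\ge q$ and $0$ otherwise. The Shapley–Shubik index of player $j$ in a game with player set $M$, $|M|=m$, is $\phi_j=\frac{1}{m!}\sum_{X\subseteq M,\,j\in X}(|X|-1)!\,(m-|X|)!\,(v(X)-v(X\setminus\{j\}))$. For $T\subseteq N$, the merged game $v_{\&T}$ is the WVG with the same quota on player set $(N\setminus T)\cup\{\&T\}$, where players outside $T$ keep their weights and $\&T$ has weight $\sum_{j\in T}w_j$. *)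

(* Defs.v *)
From HB Require Import structures.
From mathcomp Require Import all_boot all_order all_algebra.
Set Implicit Arguments. Unset Strict Implicit. Unset Printing Implicit Defensive.
Import Order.TTheory GRing.Theory Num.Theory.
Local Open Scope ring_scope.

Definition wvg (R : realFieldType) (P : finType) (q : R) (w : P -> R)
  (X : {set P}) : R :=
  if q <= \sum_(j in X) w j then 1 else 0.

Definition ssi (R : realFieldType) (P : finType) (q : R) (w : P -> R) (j : P) : R :=
  \sum_(X : {set P} | j \in X)
     (((#|X|.-1)`! * (#|P| - #|X|)`!)%:R / (#|P|`!)%:R)
       * (wvg q w X - wvg q w (X :\ j)).

(* Player set of the merged game v_{&T}: (N \ T) together with the new
   player &T, represented as None. *)
Definition merged_players (n : nat) (T : {set 'I_n}) : finType :=
  option {x : 'I_n | x \notin T}.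

Arguments merged_players : clear implicits.
Definition merged_w (R : realFieldType) (n : nat) (w : 'I_n -> R)
  (T : {set 'I_n}) (p : merged_players n T) : R :=
  match p with
  | None => \sum_(j in T) w j
  | Some x => w (val x)
  end.

Definition amp (n : nat) (T : {set 'I_n}) : merged_players n T := None.
Arguments merged_w {R n} w T p.
Arguments amp {n} T.

(* Main.v *)
From Stdlib Require Import Arith Lia.
Require Import Defs.
From HB Require Import structures.
From mathcomp Require Import all_boot all_order all_algebra.
Set Implicit Arguments. Unset Strict Implicit. Unset Printing Implicit Defensive.
Import Order.TTheory GRing.Theory Num.Theory.

Lemma big_setU1_reindex (T : finType) (R : Type) (idx : R) (op : Monoid.com_law idx)
  (A : {set T}) x (F : {set T} -> R) : x \in A ->
  \big[op/idx]_(U : {set T} | (U \subset A) && (x \in U)) F U =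
  \big[op/idx]_(V : {set T} | V \subset A :\ x) F (x |: V).
Proof.
move=> xA.
rewrite (reindex_onto (fun V => x |: V) (fun U => U :\ x)); last first.
  by move=> U /andP[_ xU]; rewrite setD1K.
apply: eq_bigl => V; rewrite setU11 andbT subsetD1.
rewrite subUset sub1set xA /=.
case xV: (x \in V); rewrite ?andbF ?andbT /=.
  apply/negbTE; rewrite negb_and; apply/orP; right; apply/eqP => E.
  by move: xV; rewrite -E setD11.
by rewrite setU1K ?xV //= eqxx andbT.
Qed.

Lemma big_subset_split (T : finType) (R : Type) (idx : R) (op : Monoid.com_law idx)
  (A : {set T}) x (F : {set T} -> R) : x \in A ->
  \big[op/idx]_(U : {set T} | U \subset A) F U =
  op (\big[op/idx]_(V : {set T} | V \subset A :\ x) F V) (\big[op/idx]_(V : {set T} | V \subset A :\ x) F (x |: V)).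
Proof.
move=> xA; rewrite (bigID (fun U : {set T} => x \in U)) /= Monoid.mulmC.
rewrite big_setU1_reindex //; congr (op _ _).
by apply: eq_bigl => U; rewrite subsetD1.
Qed.

Lemma fact_id (T : finType) (A : {set T}) (a b : nat) :
  ((\sum_(U : {set T} | U \subset A) (a + #|U|)`! * (b + #|A| - #|U|)`!) * (a + b).+1`!
   = a`! * b`! * (a + b + #|A|).+1`!)%N.
Proof.
move Ek : #|A| => k; elim: k A a b Ek => [|k IH] A a b Ek.
  have A0 : A = set0 by apply/eqP; rewrite -cards_eq0 Ek.
  rewrite A0 (eq_bigl (pred1 set0)); last by move=> U; rewrite subset0.
  by rewrite big_pred1_eq cards0 !addn0 subn0.
have [x xA] : exists x, x \in A.
  by apply/set0Pn; rewrite -card_gt0 Ek.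
have EA : #|A :\ x| = k by move: (cardsD1 x A); rewrite xA Ek add1n => -[].
rewrite (big_subset_split _ _ xA) /=.
have E1 : forall V : {set T}, V \subset A :\ x -> #|x |: V| = #|V|.+1.
  move=> V; rewrite subsetD1 => /andP[_ xV]; by rewrite cardsU1 xV.
rewrite (eq_bigr (fun V : {set T} => (a + #|V|)`! * ((b.+1) + #|A :\ x| - #|V|)`!)%N); last first.
  by move=> V _; rewrite EA addSn addnS.
rewrite [X in (_ + X)%N](eq_bigr (fun V : {set T} => (a.+1 + #|V|)`! * (b + #|A :\ x| - #|V|)`!)%N); last first.
  by move=> V HV; rewrite E1 // !addnS subSS addSn EA.
apply/eqP; rewrite -(@eqn_pmul2l (a + b).+2) //; apply/eqP.
rewrite mulnA (mulnC (a + b).+2) -mulnA -factS mulnDl.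
have H1 := IH (A :\ x) a b.+1 EA.
have H2 := IH (A :\ x) a.+1 b EA.
rewrite addnS in H1; rewrite addSn in H2.
rewrite EA H1 H2 !addnS !addSn (factS a) (factS b).
move: (a`!) (b`!) (((a + b + k).+2)`!) => fa fb N. rewrite -?plusE -?multE. nia.
Qed.

Local Open Scope ring_scope.

Lemma coef_sum1 (R : realFieldType) (P : finType) (j : P) :
  \sum_(X : {set P} | j \in X)
     (((#|X|.-1)`! * (#|P| - #|X|)`!)%:R / (#|P|`!)%:R : R) = 1.
Proof.
rewrite (eq_bigl (fun X : {set P} => (X \subset setT) && (j \in X))); last first.
  by move=> X; rewrite subsetT.
rewrite (big_setU1_reindex _ _ (in_setT j)) /=.
have EP : #|P| = (#|[set: P] :\ j|).+1.
  by move: (cardsD1 j [set: P]); rewrite in_setT cardsT add1n.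
rewrite -mulr_suml -natr_sum.
have H := fact_id ([set: P] :\ j) 0 0.
rewrite !add0n fact0 !muln1 mul1n in H.
rewrite (eq_bigr (fun V : {set P} => (#|V|`! * (#|[set: P] :\ j| - #|V|)`!)%N)); last first.
  move=> V; rewrite subsetD1 => /andP[_ jV].
  by rewrite cardsU1 jV add1n /= EP subSS.
rewrite H -EP divff // pnatr_eq0 -lt0n; exact: fact_gt0.
Qed.

Lemma ssi_le1 (R : realFieldType) (P : finType) (q : R) (w : P -> R) (j : P) :
  ssi q w j <= 1.
Proof.
rewrite /ssi -[X in _ <= X](coef_sum1 R j); apply: ler_sum => X _.
apply: ler_piMr; first by rewrite divr_ge0 ?ler0n.
rewrite /wvg; case: ifP => _; case: ifP => _;
  rewrite ?subrr ?subr0 ?sub0r ?ler01 ?lexx //.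
by rewrite (le_trans (lerN10 R)) ?ler01.
Qed.

Definition fm n (T : {set 'I_n}) (Z : {set 'I_n}) : {set merged_players n T} :=
  None |: [set Some x | x in [set x : {x : 'I_n | x \notin T} | val x \in Z]].
Definition gm n (T : {set 'I_n}) (X : {set merged_players n T}) : {set 'I_n} :=
  T :|: [set val x | x in [set x : {x : 'I_n | x \notin T} | Some x \in X]].

Lemma mem_fm_Some n (T Z : {set 'I_n}) (x : {x : 'I_n | x \notin T}) :
  (Some x \in fm T Z) = (val x \in Z).
Proof. by rewrite /fm !inE /= (mem_imset _ _ (@Some_inj _)) inE. Qed.

Lemma None_fm n (T Z : {set 'I_n}) : (None : merged_players n T) \in fm T Z.
Proof. by rewrite /fm setU11. Qed.

Lemma val_imset n (T : {set 'I_n}) (P : pred {x : 'I_n | x \notin T}) (Z : {set 'I_n}) :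
  (forall x, P x = (val x \in Z)) ->
  [set val x | x in [set x : {x : 'I_n | x \notin T} | P x]] = Z :\: T.
Proof.
move=> HP; apply/setP => j; rewrite !inE.
case: (boolP (j \in T)) => jT /=.
  apply/imsetP => -[[y Hy] _ E]; by rewrite E (negbTE Hy) in jT.
have -> : j = val (exist _ j jT : {x : 'I_n | x \notin T}) by [].
by rewrite (mem_imset _ _ val_inj) inE HP.
Qed.

Lemma gm_fm n (T Z : {set 'I_n}) : gm (fm T Z) = T :|: Z.
Proof.
rewrite /gm (@val_imset n T _ Z); last by move=> x; rewrite mem_fm_Some.
apply/setP => j; rewrite !inE; by case: (j \in T); case: (j \in Z).
Qed.

Lemma fm_gm n (T : {set 'I_n}) (X : {set merged_players n T}) :
  None \in X -> fm T (gm X) = X.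
Proof.
move=> NX; apply/setP => -[x|]; last by rewrite None_fm NX.
rewrite mem_fm_Some /gm inE (negbTE (valP x)) /= (mem_imset _ _ val_inj) inE //.
Qed.

Lemma None_notin_imset n (T : {set 'I_n}) (B : {set {x : 'I_n | x \notin T}}) :
  (None : merged_players n T) \notin [set Some x | x in B].
Proof. by apply/imsetP => -[x _]. Qed.

Lemma fmD n (T Z : {set 'I_n}) : fm T Z :\ None =
  [set Some x | x in [set x : {x : 'I_n | x \notin T} | val x \in Z]].
Proof. by rewrite /fm setU1K // None_notin_imset. Qed.

Lemma card_fm n (T Z : {set 'I_n}) : #|fm T Z| = #|Z :\: T|.+1.
Proof.
rewrite /fm cardsU1 None_notin_imset add1n (card_imset _ (@Some_inj _)).
rewrite -(@val_imset n T (fun x => val x \in Z) Z) // (card_imset _ val_inj).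
by [].
Qed.

Lemma sum_fmD (R : realFieldType) n (w : 'I_n -> R) (T Z : {set 'I_n}) :
  \sum_(p in fm T Z :\ None) merged_w w T p = \sum_(j in Z :\: T) w j.
Proof.
rewrite fmD big_imset /=; last by move=> x y _ _; apply: Some_inj.
rewrite -(@val_imset n T (fun x => val x \in Z) Z) // big_imset //.
by move=> x y _ _; apply: val_inj.
Qed.

Lemma sum_fm (R : realFieldType) n (w : 'I_n -> R) (T Z : {set 'I_n}) :
  T \subset Z ->
  \sum_(p in fm T Z) merged_w w T p = \sum_(j in Z) w j.
Proof.
move=> TZ; rewrite {1}/fm big_setU1 ?None_notin_imset //= -fmD sum_fmD.
by rewrite [in RHS](big_setID T) /= (setIidPr TZ).
Qed.

Lemma merged_ssi (R : realFieldType) n (q : R) (w : 'I_n -> R) (T : {set 'I_n}) :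
  ssi q (merged_w w T) (amp T) =
  \sum_(W : {set 'I_n} | T \subset W)
    ((#|W :\: T|`! * (#|merged_players n T| - #|W :\: T|.+1)`!)%:R
       / (#|merged_players n T|`!)%:R) * (wvg q w W - wvg q w (W :\: T)).
Proof.
rewrite /ssi (reindex_onto (@fm n T) (@gm n T)) /=; last first.
  by move=> X; exact: fm_gm.
have key : forall Z : {set 'I_n},
    ((amp T \in fm T Z) && (gm (fm T Z) == Z)) = (T \subset Z).
  move=> Z; rewrite /amp None_fm gm_fm /=.
  by apply/idP/idP => [/eqP/setUidPr | /setUidPr ->].
apply: eq_big => Z; first exact: key.
rewrite key => TZ.
by rewrite card_fm /= /wvg sum_fm // /amp sum_fmD.
Qed.

Lemma bool_ineq (R : numDomainType) (b1 b2 b3 b4 : bool) :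
  (b1 -> b3) -> (b4 -> b2) -> (b4 -> b3) ->
  ((if b1 then 1 else 0) - (if b2 then 1 else 0) : R) <=
  (if b3 then 1 else 0) - (if b4 then 1 else 0).
Proof.
case: b1; case: b2; case: b3; case: b4 => //= h1 h2 h3;
  rewrite ?subrr ?subr0 ?sub0r ?lexx ?ler01 //;
  try (by move: (h1 erefl)); try (by move: (h2 erefl)); try (by move: (h3 erefl)).
all: by rewrite (le_trans (lerN10 R)) ?ler01.
Qed.

Lemma sum_mono (R : realFieldType) (P : finType) (w : P -> R)
  (hw : forall j, 0 <= w j) (A B : {set P}) :
  A \subset B -> \sum_(j in A) w j <= \sum_(j in B) w j.
Proof.
move=> AB; rewrite [in X in _ <= X](big_setID A) /= (setIidPr AB).
by rewrite lerDl sumr_ge0.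
Qed.

Lemma wvg_mono_b (R : realFieldType) (P : finType) (q : R) (w : P -> R)
  (hw : forall j, 0 <= w j) (A B : {set P}) :
  A \subset B -> q <= \sum_(j in A) w j -> q <= \sum_(j in B) w j.
Proof. by move=> AB h; apply: le_trans h (sum_mono hw AB). Qed.

Lemma piv_le (R : realFieldType) n (q : R) (w : 'I_n -> R)
  (hw : forall j, 0 <= w j) (i : 'I_n) (T Z W : {set 'I_n}) :
  i \in T -> i \in Z -> Z :|: T = W ->
  wvg q w Z - wvg q w (Z :\ i) <= wvg q w W - wvg q w (W :\: T).
Proof.
move=> iT iZ E; rewrite /wvg; apply: bool_ineq; apply: wvg_mono_b => //.
- by rewrite -E subsetUl.
- apply/subsetP => j; rewrite -E !inE.
  case: (eqVneq j i) => [->|ne]; first by rewrite iT.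
  by case: (j \in T); case: (j \in Z).
- exact: subsetDl.
Qed.

Lemma dT_ge0 (R : realFieldType) n (q : R) (w : 'I_n -> R)
  (hw : forall j, 0 <= w j) (T W : {set 'I_n}) :
  0 <= wvg q w W - wvg q w (W :\: T).
Proof.
rewrite subr_ge0 /wvg; case: ifP => h; last by case: ifP; rewrite ?lexx ?ler01.
by rewrite (wvg_mono_b hw (subsetDl W T) h) lexx.
Qed.

Lemma natfact n y s u : (y + s.+1 <= n -> n - (y.+1 + u) = n - s.+1 - y + s - u)%N.
Proof. move/ssrnat.leP => h. rewrite -?minusE -?plusE in h *. lia. Qed.

Lemma coef_merge (R : realFieldType) n (i : 'I_n) (S W T : {set 'I_n}) :
  T = i |: S -> i \notin S -> T \subset W ->
  \sum_(Z : {set 'I_n} | (i \in Z) && (Z :|: T == W))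
     (((#|Z|.-1)`! * (n - #|Z|)`!)%:R / (n`!)%:R : R)
  = (#|W :\: T|`! * ((n - #|T|).+1 - #|W :\: T|.+1)`!)%:R
      / ((n - #|T|).+1`!)%:R.
Proof.
move=> ET iS TW; set D := W :\: S.
have iT : i \in T by rewrite ET setU11.
have iW : i \in W by apply: (subsetP TW).
have ST : S \subset T by rewrite ET; apply: subsetUr.
rewrite (reindex_onto (fun U => D :|: U) (fun Z => Z :&: S)) /=; last first.
  move=> Z /andP[iZ /eqP E]; apply/setP => j; rewrite /D -E ET !inE.
  case: (eqVneq j i) => [->|ne] /=; first by rewrite iZ (negbTE iS).
  by case: (j \in S); case: (j \in Z).
rewrite (eq_bigl (fun U : {set 'I_n} => U \subset S)); last first.
  move=> U; apply/idP/idP.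
    by move=> /andP[_ /eqP E]; rewrite -E subsetIr.
  move=> US; have HU := subsetP US.
  have SW : S \subset W by apply: subset_trans ST TW.
  rewrite !inE iW (negbTE iS) /=; apply/andP; split; apply/eqP/setP => j;
    rewrite /D ?ET !inE.
    case: (eqVneq j i) => [->|ne] /=; first by rewrite iW orbT.
    case jU: (j \in U).
      by rewrite (subsetP SW) // HU.
    case jS: (j \in S); first by rewrite orbT (subsetP SW).
    by case: (j \in W).
  case jU: (j \in U); first by rewrite (HU _ jU) orbT.
  by case: (j \in S); rewrite ?andbF ?andbT ?orbF.
set y := #|W :\: T|.
have sT : #|T| = #|S|.+1 by rewrite ET cardsU1 iS.
have cW : (y + #|T| = #|W|)%N.
  rewrite /y cardsD (setIidPr TW) subnK //; exact: subset_leq_card.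
have Wn : (#|W| <= n)%N by have := max_card (mem W); rewrite card_ord.
have hb : (y + #|S|.+1 <= n)%N by rewrite -sT cW.
have cD : #|D| = y.+1.
  have -> : D = i |: (W :\: T).
    apply/setP => j; rewrite /D ET !inE.
    case: (eqVneq j i) => [->|ne] /=; first by rewrite iW iS.
    by case: (j \in S).
  by rewrite cardsU1 inE iT.
rewrite (eq_bigr (fun U : {set 'I_n} =>
   ((y + #|U|)`! * ((n - #|T| - y) + #|S| - #|U|)`!)%:R / n`!%:R)); last first.
  move=> U US.
  have -> : #|D :|: U| = (y.+1 + #|U|)%N.
    rewrite cardsU cD.
    have -> : D :&: U = set0.
      apply/setP => j; rewrite /D !inE.
      case jU: (j \in U); last by rewrite !andbF.
      by rewrite (subsetP US _ jU) /= ?andbF ?andbT.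
    by rewrite cards0 subn0.
  by rewrite addSn /= (natfact _ hb) sT.
rewrite -mulr_suml -natr_sum.
have ym : (y <= n - #|T|)%N.
  move: Wn; rewrite -cW => /ssrnat.leP h; apply/ssrnat.leP.
  rewrite -?minusE -?plusE in h *; lia.
have H := fact_id S y (n - #|T| - y).
rewrite (subnKC ym) in H.
have En : ((n - #|T| + #|S|).+1 = n)%N.
  move: hb; rewrite sT => /ssrnat.leP h; apply/eqP/ssrnat.eqnP.
  rewrite -?minusE -?plusE in h *; lia.
rewrite En in H.
rewrite subSS.
apply/eqP; rewrite eqr_div ?pnatr_eq0 -?lt0n ?fact_gt0 //.
by rewrite -!natrM eqr_nat H.
Qed.

Lemma card_merged n (T : {set 'I_n}) : #|merged_players n T| = (n - #|T|).+1.
Proof.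
rewrite /merged_players card_option card_sig; congr _.+1.
have h := cardsC T; rewrite card_ord in h.
rewrite -[X in (X - _)%N]h addKn; apply: eq_card => x; by rewrite !inE.
Qed.

Theorem mainTheorem15 (R : realFieldType) (n : nat) (q : R) (w : 'I_n -> R)
  (hw : forall j, 0 <= w j) (hq0 : 0 < q) (hqN : q <= \sum_(j < n) w j)
  (i : 'I_n) (S : {set 'I_n}) (hS : i \notin S) :
  ssi q w i <= ssi q (merged_w w (i |: S)) (amp (i |: S)) /\
  ssi q (merged_w w (i |: S)) (amp (i |: S)) <= 1.
Proof.
split; last exact: ssi_le1.
rewrite merged_ssi card_merged /ssi card_ord.
set T := i |: S.
have iT : i \in T by rewrite setU11.
rewrite (partition_big (fun Z => Z :|: T) (fun W => T \subset W)) /=; last first.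
  by move=> Z _; apply: subsetUr.
apply: ler_sum => W TW.
apply: le_trans (_ : \sum_(Z : {set 'I_n} | (i \in Z) && (Z :|: T == W))
   (((#|Z|.-1)`! * (n - #|Z|)`!)%:R / (n`!)%:R)
     * (wvg q w W - wvg q w (W :\: T)) <= _).
  apply: ler_sum => Z /andP[iZ /eqP E]; apply: ler_wpM2l.
    by rewrite divr_ge0 ?ler0n.
  have HH := piv_le q hw iT iZ E; exact HH.
by rewrite -mulr_suml (coef_merge _ (erefl T) hS TW).
Qed.
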